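(* Let $f$ be a homogeneous polynomial of degree $d\ge 2$ on $\mathbb{C}^2$. Then the holomorphic Hessian metric $-\frac{1}{d(d-1)}\partial^2 f/\partial x_i\partial x_j$ is flat on the open set where the Hessian determinant $\det(\partial^2 f/\partial x_i\partial x_j)$ is nonzero.
   Context: Over $\mathbb{C}$, a (holomorphic) metric means a nondegenerate symmetric complex-bilinear form on the holomorphic tangent bundle; its Levi-Civita connection, curvature tensor and sectional curvatures are defined by the same algebraic formulas as for real pseudo-Riemannian metrics, and flat means the curvature tensor vanishes. *)

(* Defs.v *)
(* Holomorphic derivatives are the
   MathComp-Analysis directional derivatives over the scalar field C itself
   (so h -> 0 in C: complex differentiation when C = R[i]). *)
From HB Require Import structures.
From mathcomp Require Import all_boot all_order all_algebra.
From mathcomp Require Import all_classical all_reals all_analysis.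
From mathcomp Require Import complex.
Set Implicit Arguments. Unset Strict Implicit. Unset Printing Implicit Defensive.
Import Order.TTheory GRing.Theory Num.Theory.
Import numFieldNormedType.Exports.
Local Open Scope ring_scope.

Definition pd (C : numFieldType) (f : 'rV[C]_2 -> C) (i : 'I_2) (x : 'rV[C]_2) : C :=
  'D_(delta_mx 0 i) f x.

Definition hom2 (C : numFieldType) (d : nat) (a : 'I_d.+1 -> C) (x : 'rV[C]_2) : C :=
  \sum_(k < d.+1) a k * x 0 0 ^+ k * x 0 1 ^+ (d - k).

Definition hessian (C : numFieldType) (f : 'rV[C]_2 -> C) (x : 'rV[C]_2) : 'M[C]_2 :=
  \matrix_(i, j) pd (pd f j) i x.

Definition metric_mx (C : numFieldType) (g : 'I_2 -> 'I_2 -> 'rV[C]_2 -> C)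
  (x : 'rV[C]_2) : 'M[C]_2 := \matrix_(i, j) g i j x.

Definition hessian_metric (C : numFieldType) (d : nat) (f : 'rV[C]_2 -> C) :
  'I_2 -> 'I_2 -> 'rV[C]_2 -> C :=
  fun i j x => - ((d * (d - 1))%:R)^-1 * pd (pd f j) i x.

Definition christoffel (C : numFieldType) (g : 'I_2 -> 'I_2 -> 'rV[C]_2 -> C)
  (k i j : 'I_2) (x : 'rV[C]_2) : C :=
  2^-1 * \sum_(l < 2) (invmx (metric_mx g x)) k l *
           (pd (g j l) i x + pd (g i l) j x - pd (g i j) l x).

(* Riemann curvature tensor R^l_{kij} (components of R(d_i,d_j) d_k):
   d_i Gamma^l_jk - d_j Gamma^l_ik + Gamma^l_im Gamma^m_jk - Gamma^l_jm Gamma^m_ik *)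
Definition curvature (C : numFieldType) (g : 'I_2 -> 'I_2 -> 'rV[C]_2 -> C)
  (l k i j : 'I_2) (x : 'rV[C]_2) : C :=
  pd (christoffel g l j k) i x - pd (christoffel g l i k) j x
  + \sum_(m < 2) (christoffel g l i m x * christoffel g m j k x
                  - christoffel g l j m x * christoffel g m i k x).

Definition flat_on (C : numFieldType) (g : 'I_2 -> 'I_2 -> 'rV[C]_2 -> C)
  (U : 'rV[C]_2 -> Prop) : Prop :=
  forall x, U x -> forall l k i j : 'I_2, curvature g l k i j x = 0.

(* Main.v *)
Require Import Defs.
From HB Require Import structures.
From mathcomp Require Import all_boot all_order all_algebra.
From mathcomp Require Import all_classical all_reals all_analysis.
From mathcomp Require Import complex ring zify.
Set Implicit Arguments. Unset Strict Implicit. Unset Printing Implicit Defensive.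
Import Order.TTheory GRing.Theory Num.Theory.
Import numFieldNormedType.Exports.
Local Open Scope classical_set_scope.
Local Open Scope ring_scope.

Module A.
Section Jet.
Variable C : numFieldType.
Local Notation V := 'rV[C]_2.
Implicit Types (F G : V -> C) (x v : V).

Lemma isd_cst (c : C) x v : is_derive x v (fun _ : V => c) 0.
Proof. exact: is_derive_cst. Qed.

Lemma isd_add F G x v dF dG : is_derive x v F dF -> is_derive x v G dG ->
  is_derive x v (fun y => F y + G y) (dF + dG).
Proof. move=> h1 h2; exact: is_deriveD. Qed.

Lemma isd_sub F G x v dF dG : is_derive x v F dF -> is_derive x v G dG ->
  is_derive x v (fun y => F y - G y) (dF - dG).
Proof. move=> h1 h2; exact: is_deriveB. Qed.

Lemma isd_opp F x v dF : is_derive x v F dF ->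
  is_derive x v (fun y => - F y) (- dF).
Proof. move=> h1; exact: is_deriveN. Qed.

Lemma isd_mul F G x v dF dG : is_derive x v F dF -> is_derive x v G dG ->
  is_derive x v (fun y => F y * G y) (F x * dG + G x * dF).
Proof. move=> h1 h2; exact: is_deriveM. Qed.

Lemma isd_pow F n x v dF : is_derive x v F dF ->
  is_derive x v (fun y => F y ^+ n) (n%:R * F x ^+ n.-1 * dF).
Proof.
move=> h1; rewrite (_ : (fun y => F y ^+ n) = F ^+ n); last first.
  by apply/funext=> y; rewrite exprfctE.
exact: is_deriveX.
Qed.

Lemma isd_inv F x v dF : F x != 0 -> is_derive x v F dF ->
  is_derive x v (fun y => (F y)^-1) (- (F x) ^- 2 * dF).
Proof.
move=> h0 [h1 h2]; apply: DeriveDef; first exact: derivableV.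
by rewrite deriveV // h2.
Qed.

Lemma isd_coord (j : 'I_2) x v : is_derive x v (fun y : V => y 0 j) (v 0 j).
Proof.
have L : (fun h : C => h^-1 *: (((fun y : V => y 0 j) \o shift x) (h *: v) - x 0 j)) @ 0^' --> v 0 j.
  apply: (cvg_trans _ (cvg_cst (v 0 j))).
  apply: near_eq_cvg; near=> h.
  have hn0 : h != 0 by near: h; exact: nbhs_dnbhs_neq.
  rewrite /= !mxE addrK /GRing.scale /= mulrA mulVf // mul1r.
  done.
  exact: dnbhs_filter.
constructor; first by apply/cvg_ex; exists (v 0 j).
exact: cvg_lim L.
Unshelve. all: by end_near. Qed.

Lemma isd_sum n (h : 'I_n -> V -> C) x v (dh : 'I_n -> C) :
  (forall i, is_derive x v (h i) (dh i)) ->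
  is_derive x v (fun y => \sum_(i < n) h i y) (\sum_(i < n) dh i).
Proof. by move=> H; rewrite -fct_sumE; exact: is_derive_sum. Qed.

Lemma isd_eq F x v d1 d2 : is_derive x v F d1 -> d1 = d2 -> is_derive x v F d2.
Proof. by move=> h <-. Qed.

Lemma pd_val F (i : 'I_2) x d : is_derive x (delta_mx 0 i) F d -> pd F i x = d.
Proof. by case. Qed.

Definition Dab d (a : 'I_d.+1 -> C) (al be : nat) (y : V) : C :=
  \sum_(k < d.+1) a k * ((k ^_ al)%:R * ((d - k) ^_ be)%:R) *
     (y 0 0 ^+ (k - al) * y 0 1 ^+ (d - k - be)).

Lemma isd_Dab d a al be x v : is_derive x v (@Dab d a al be)
  (\sum_(k < d.+1) a k * ((k ^_ al)%:R * ((d - k) ^_ be)%:R) *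
     (x 0 0 ^+ (k - al) * ((d - k - be)%:R * x 0 1 ^+ (d - k - be).-1 * v 0 1)
      + x 0 1 ^+ (d - k - be) * ((k - al)%:R * x 0 0 ^+ (k - al).-1 * v 0 0))).
Proof.
apply: isd_sum => k.
apply: isd_eq. apply: isd_mul.
  apply: isd_mul; apply: isd_pow; exact: isd_coord.
by rewrite /= mulr0 addr0.
Qed.

Lemma derivable_Dab d a al be x v : derivable (@Dab d a al be) x v.
Proof. by case: (isd_Dab a al be x v). Qed.

Lemma pd0_Dab d a al be : pd (@Dab d a al be) 0 = Dab a al.+1 be.
Proof.
apply/funext => x; rewrite (pd_val (isd_Dab a al be x _)) /Dab.
apply: eq_bigr => k _; rewrite !mxE /= ffactnSr natrM subnS; ring.
Qed.

Lemma pd1_Dab d a al be : pd (@Dab d a al be) 1 = Dab a al be.+1.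
Proof.
apply/funext => x; rewrite (pd_val (isd_Dab a al be x _)) /Dab.
apply: eq_bigr => k _; rewrite !mxE /= ffactnSr natrM subnS; ring.
Qed.

Lemma det2 (R : comRingType) (A : 'M[R]_2) : \det A = A 0 0 * A 1 1 - A 0 1 * A 1 0.
Proof.
rewrite (expand_det_row _ 0) !big_ord_recl big_ord0 /cofactor !det_mx11 !mxE /= !add0n expr0 expr1 !mul1r addr0 mulN1r.
have E3 : lift (lift ord0 ord0) (0 : 'I_1) = 0 :> 'I_2 by apply/val_inj.
have E1 : lift (0 : 'I_2) (0 : 'I_1) = 1 :> 'I_2 by apply/val_inj.
have E2 : lift (ord0 : 'I_2) (ord0 : 'I_1) = 1 :> 'I_2 by apply/val_inj.
by rewrite E3 ?E1 ?E2 mulrN.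
Qed.


Lemma isd_D0 d a al be x : is_derive x (delta_mx 0 0) (@Dab d a al be) (Dab a al.+1 be x).
Proof.
have h := derivableP (@derivable_Dab d a al be x (delta_mx 0 0)).
by rewrite -pd0_Dab.
Qed.

Lemma isd_D1 d a al be x : is_derive x (delta_mx 0 1) (@Dab d a al be) (Dab a al be.+1 x).
Proof.
have h := derivableP (@derivable_Dab d a al be x (delta_mx 0 1)).
by rewrite -pd1_Dab.
Qed.

Lemma diffXn (f : V -> C) n x : differentiable f x -> differentiable (f ^+ n) x.
Proof.
case: n => [_|n]; last exact: differentiableX.
by rewrite expr0; exact: differentiable_cst.
Qed.

Lemma diff_Dab d a al be x : differentiable (@Dab d a al be) x.
Proof.
have -> : @Dab d a al be = \sum_(k < d.+1) ((fun _ => a k * ((k ^_ al)%:R * ((d - k) ^_ be)%:R)) *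
     ((fun y : V => y 0 0) ^+ (k - al) * (fun y : V => y 0 1) ^+ (d - k - be))).
  by apply/funext => y; rewrite fct_sumE; apply: eq_bigr => k _; rewrite /= !exprfctE.
apply: differentiable_sum => k; apply: differentiableM => //.
by apply: differentiableM; apply: diffXn; apply: differentiable_coord.
Qed.

Lemma Dab_big d a al be x : (d < al + be)%N -> @Dab d a al be x = 0.
Proof.
move=> h; apply: big1 => k _.
case: (ltnP k al) => h1; first by rewrite ffact_small // mul0r mulr0 mul0r.
rewrite [((d - k) ^_ be)]ffact_small ?mulr0 ?mul0r //.
have := ltn_ord k; lia.
Qed.

Lemma Dab_euler d a al be x :
  x 0 0 * @Dab d a al.+1 be x + x 0 1 * Dab a al be.+1 x = (d - al - be)%:R * Dab a al be x.
Proof.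
rewrite /Dab !mulr_sumr -big_split /=; apply: eq_bigr => k _.
have hk := ltn_ord k.
case: (ltnP k al) => h1.
  by rewrite (ffact_small h1) (ffact_small (leqW h1)); ring.
case: (ltnP (d - k) be) => h2.
  by rewrite (ffact_small h2) (ffact_small (leqW h2)); ring.
have E : (d - al - be = (k - al) + (d - k - be))%N by lia.
rewrite E natrD !ffactnSr !natrM !subnS.
move: (k - al)%N (d - k - be)%N => m1 m2.
case: m1 => [|m1]; case: m2 => [|m2] /=; rewrite ?exprS; ring.
Qed.
Lemma inv2E (F : fieldType) (A : 'M[F]_2) : \det A != 0 ->
  [/\ invmx A 0 0 = A 1 1 / \det A, invmx A 0 1 = - A 0 1 / \det A,
      invmx A 1 0 = - A 1 0 / \det A & invmx A 1 1 = A 0 0 / \det A].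
Proof.
rewrite /invmx unitmxE unitfE => ->; rewrite !mxE /cofactor !det_mx11 !mxE /=.
have E1 : lift (0 : 'I_2) (0 : 'I_1) = 1 :> 'I_2 by apply/val_inj.
have E0 : lift (1 : 'I_2) (0 : 'I_1) = 0 :> 'I_2 by apply/val_inj.
rewrite E1 E0 /= expr0 expr1 !mul1r mulN1r.
by split; rewrite mulrC // ?mulN1r // (_ : (1 %% 2 + 1 %% 2)%N = 2) // expr2 mulN1r opprK mul1r.
Qed.

Lemma ord2 (i : 'I_2) : i = 0 \/ i = 1.
Proof. by case: i => [[|[|n]]] // Hi; [left|right]; apply/val_inj. Qed.

Section Main.
Variables (d : nat) (a : 'I_d.+1 -> C).

Definition DD (s : seq 'I_2) := Dab a (count (pred1 0) s) (count (pred1 1) s).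

Lemma pd_DD i s : pd (DD s) i = DD (i :: s).
Proof.
case: (ord2 i) => ->; rewrite /DD ?pd0_Dab ?pd1_Dab /=; by [].
Qed.

Lemma DD_swap i j s : DD (j :: i :: s) = DD (i :: j :: s).
Proof. by rewrite /DD /= addnCA [X in Dab _ _ X]addnCA. Qed.

Lemma DD_rot i j m : DD [:: m; i; j] = DD [:: i; j; m].
Proof. by rewrite /DD /= !addn0 addnC -addnA [X in Dab _ _ X]addnC -[X in Dab _ _ X]addnA. Qed.

Lemma isd_DD s i x : is_derive x (delta_mx 0 i) (DD s) (DD (i :: s) x).
Proof.
have h := derivableP (@derivable_Dab d a (count (pred1 0) s) (count (pred1 1) s) x (delta_mx 0 i)).
by move: h; rewrite -/(DD s) -/(pd (DD s) i x) pd_DD.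
Qed.

Lemma hom2_DD : hom2 a = DD [::].
Proof.
apply/funext => y; rewrite /hom2 /DD /Dab /=; apply: eq_bigr => k _.
by rewrite ?ffactn0 ?subn0 !mulr1 mulrA.
Qed.


Lemma sum2 (F : 'I_2 -> C) : \sum_(m < 2) F m = F 0 + F 1.
Proof.
rewrite big_ord_recl big_ord1; congr (_ + F _); exact/val_inj.
Qed.

Definition cc : C := - ((d * (d - 1))%:R)^-1.
Definition gm := hessian_metric d (hom2 a).

Lemma g_DD i j : gm i j = fun y => cc * DD [:: i; j] y.
Proof. by apply/funext => y; rewrite /gm /hessian_metric hom2_DD !pd_DD. Qed.

Lemma pd_g i j m : pd (gm j m) i = fun y => cc * DD [:: i; j; m] y.
Proof.
apply/funext => y; rewrite g_DD; apply: pd_val; apply: isd_eq.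
  apply: isd_mul; try exact: isd_DD.
  all: try exact: isd_cst.
by rewrite /= mulr0 addr0.
Qed.

Definition dt y := cc * DD [:: 0; 0] y * (cc * DD [:: 1; 1] y) - cc * DD [:: 0; 1] y * (cc * DD [:: 1; 0] y).
Definition sg (l m : 'I_2) : C := if l == m then 1 else -1.
Definition adjE l m y := sg l m * (cc * DD [:: 1 - m; 1 - l] y).
Definition Gn l i j y := 2^-1 * (adjE l 0 y / dt y * (cc * DD [:: i; j; 0] y) +
   adjE l 1 y / dt y * (cc * DD [:: i; j; 1] y)).

Lemma det_g y : \det (metric_mx gm y) = dt y.
Proof. by rewrite det2 !mxE !g_DD. Qed.

Lemma inv_g y l m : dt y != 0 -> invmx (metric_mx gm y) l m = adjE l m y / dt y.
Proof.
move=> h; have h' : \det (metric_mx gm y) != 0 by rewrite det_g.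
have [e00 e01 e10 e11] := inv2E h'.
rewrite det_g in e00 e01 e10 e11.
case: (ord2 l) => ->; case: (ord2 m) => ->;
  by rewrite ?e00 ?e01 ?e10 ?e11 /adjE /sg !mxE !g_DD /= ?mul1r ?mulN1r.
Qed.

End Main.
End Jet.

End A.
Import A.

Section B.
Variables (C : numFieldType) (d : nat) (a : 'I_d.+1 -> C).
Local Notation DD := (@DD C d a).
Local Notation gm := (@gm C d a).
Local Notation dt := (@dt C d a).
Local Notation Gn := (@Gn C d a).
Local Notation cc := (@cc C d).

Lemma sum3_eq (p1 p2 p3 q1 q2 q3 : C) : p1 = q1 -> p2 = q2 -> p3 = q3 -> p1 + p2 - p3 = q1 + q2 - q3.
Proof. by move=> -> -> ->. Qed.

Lemma chr_near l i j y : dt y != 0 -> christoffel gm l i j y = Gn l i j y.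
Proof.
move=> h; rewrite /christoffel sum2 !(inv_g _ _ h) /Gn.
congr (_ * (_ * _ + _ * _)).
  apply: etrans (sum3_eq (congr1 (fun f => f y) (pd_g a i j 0)) (congr1 (fun f => f y) (pd_g a j i 0))
     (congr1 (fun f => f y) (pd_g a 0 i j))) _.
  cbv beta. rewrite (DD_swap a i j [:: 0]) (DD_rot a i j 0). ring.
apply: etrans (sum3_eq (congr1 (fun f => f y) (pd_g a i j 1)) (congr1 (fun f => f y) (pd_g a j i 1))
     (congr1 (fun f => f y) (pd_g a 1 i j))) _.
cbv beta. rewrite (DD_swap a i j [:: 1]) (DD_rot a i j 1). ring.
Qed.





Lemma curv_fold (g : 'I_2 -> 'I_2 -> 'rV[C]_2 -> C) l k i j x :
  curvature g l k i j x = (fun Ch : 'I_2 -> 'I_2 -> 'I_2 -> 'rV[C]_2 -> C =>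
    pd (Ch l j k) i x - pd (Ch l i k) j x
  + \sum_(m < 2) (Ch l i m x * Ch m j k x - Ch l j m x * Ch m i k x)) (christoffel g).
Proof. by []. Qed.

Lemma curv_abs (Ch : 'I_2 -> 'I_2 -> 'I_2 -> 'rV[C]_2 -> C) l k x (B0 B1 : C)
   (Y : 'I_2 -> 'I_2 -> 'I_2 -> C) :
  pd (Ch l 1 k) 0 x = B0 -> pd (Ch l 0 k) 1 x = B1 ->
  (forall p q r, Ch p q r x = Y p q r) ->
  pd (Ch l 1 k) 0 x - pd (Ch l 0 k) 1 x
  + \sum_(m < 2) (Ch l 0 m x * Ch m 1 k x - Ch l 1 m x * Ch m 0 k x) =
  B0 - B1 + ((Y l 0 0 * Y 0 1 k - Y l 1 0 * Y 0 0 k) +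
     (Y l 0 1 * Y 1 1 k - Y l 1 1 * Y 1 0 k)).
Proof.
move=> h0 h1 hY; rewrite sum2.
rewrite h0.
rewrite h1.
rewrite !hY.
done.
Qed.

Ltac jet := repeat (first [ apply: isd_cst | apply: isd_DD | apply: isd_add | apply: isd_sub
   | apply: isd_opp | apply: isd_mul | apply: isd_inv ]).


Lemma diff_dt x : differentiable dt x.
Proof.
have -> : dt = (cst cc * DD [:: 0; 0]) * (cst cc * DD [:: 1; 1]) -
   (cst cc * DD [:: 0; 1]) * (cst cc * DD [:: 1; 0]) by [].
apply: differentiableB; apply: differentiableM; apply: differentiableM;
  (exact: differentiable_cst || exact: diff_Dab).
Qed.

Lemma cc_neq0 : (2 <= d)%N -> cc != 0.
Proof.
move=> hd; rewrite /A.cc oppr_eq0 invr_eq0 pnatr_eq0 muln_eq0; apply/negP.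
case/orP => /eqP; lia.
Qed.

Lemma hess_entry x i j : hessian (hom2 a) x i j = DD [:: i; j] x.
Proof. by rewrite /hessian mxE hom2_DD pd_DD pd_DD. Qed.

Lemma mul4_eq (p1 p2 p3 p4 q1 q2 q3 q4 : C) : p1 = q1 -> p2 = q2 -> p3 = q3 -> p4 = q4 ->
  p1 * p2 - p3 * p4 = q1 * q2 - q3 * q4.
Proof. by move=> -> -> -> ->. Qed.

Lemma dt_hess x : dt x = cc * cc * \det (hessian (hom2 a) x).
Proof.
rewrite det2.
rewrite (mul4_eq (hess_entry x 0 0) (hess_entry x 1 1) (hess_entry x 0 1) (hess_entry x 1 0)).
rewrite /A.dt; ring.
Qed.

Lemma curv01 x : (2 <= d)%N -> \det (hessian (hom2 a) x) != 0 ->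
  forall l k, curvature gm l k 0 1 x = 0.
Proof.
move=> hd hx l k.
have hc := cc_neq0 hd.
have hdx : dt x != 0 by rewrite dt_hess !mulf_neq0.
have nr : \forall y \near x, dt y != 0.
  exact: (cvgr_neq0 (dt x) (differentiable_continuous (diff_dt x)) hdx).
have e1 : x 0 0 * Dab a 3 0 x + x 0 1 * Dab a 2 1 x = (d - 2)%:R * Dab a 2 0 x.
  by rewrite Dab_euler subn0.
have e2 : x 0 0 * Dab a 2 1 x + x 0 1 * Dab a 1 2 x = (d - 2)%:R * Dab a 1 1 x.
  by rewrite Dab_euler -subnDA.
have e3 : x 0 0 * Dab a 1 2 x + x 0 1 * Dab a 0 3 x = (d - 2)%:R * Dab a 0 2 x.
  by rewrite Dab_euler subn0.
have [d2|d2] := eqVneq d 2%N.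
{   have zz : forall al be, (2 < al + be)%N -> Dab a al be x = 0.
    by move=> al be h; apply: Dab_big; rewrite d2.
have hdx' := hdx.
have h2 : (2%:R : C) != 0 by rewrite pnatr_eq0.
evar (P0 : GRing.Field.sort C).
have HP0 : is_derive x (delta_mx 0 0) (Gn l 1 k) P0.
  rewrite /Gn /adjE /A.dt /sg; jet; exact hdx.
evar (P1 : GRing.Field.sort C).
have HP1 : is_derive x (delta_mx 0 1) (Gn l 0 k) P1.
  rewrite /Gn /adjE /A.dt /sg; jet; exact hdx.
rewrite curv_fold.
apply: etrans (curv_abs (Y := fun p q r => Gn p q r x) _ _ _) _.
- apply: etrans _ (pd_val HP0); apply: near_eq_derive; near=> y; apply: chr_near; near: y; exact: nr.
- apply: etrans _ (pd_val HP1); apply: near_eq_derive; near=> y; apply: chr_near; near: y; exact: nr.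
- by move=> p q r; apply: chr_near.
subst P0 P1; rewrite /Gn /adjE /A.dt /sg; cbv beta.
clear HP0 HP1.
rewrite /A.dt /A.DD in hdx'.
case: (ord2 l) => ->; case: (ord2 k) => ->; rewrite /= /A.DD.
all: set x0 := x 0 0 in e1 e2 e3 *.
all: set x1 := x 0 1 in e1 e2 e3 *.
all: set v20 := Dab a 2 0 x in e1 e2 e3 hdx' *.
all: set v11 := Dab a 1 1 x in e1 e2 e3 hdx' *.
all: set v02 := Dab a 0 2 x in e1 e2 e3 hdx' *.
all: set v30 := Dab a 3 0 x in e1 e2 e3 *.
all: set v21 := Dab a 2 1 x in e1 e2 e3 *.
all: set v12 := Dab a 1 2 x in e1 e2 e3 *.
all: set v03 := Dab a 0 3 x in e1 e2 e3 *.
all: set v40 := Dab a 4 0 x.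
all: set v31 := Dab a 3 1 x.
all: set v22 := Dab a 2 2 x.
all: set v13 := Dab a 1 3 x.
all: set v04 := Dab a 0 4 x.

  all: have Zv30 : v30 = 0 := zz 3 0 isT.
  all: have Zv21 : v21 = 0 := zz 2 1 isT.
  all: have Zv12 : v12 = 0 := zz 1 2 isT.
  all: have Zv03 : v03 = 0 := zz 0 3 isT.
  all: have Zv40 : v40 = 0 := zz 4 0 isT.
  all: have Zv31 : v31 = 0 := zz 3 1 isT.
  all: have Zv22 : v22 = 0 := zz 2 2 isT.
  all: have Zv13 : v13 = 0 := zz 1 3 isT.
  all: have Zv04 : v04 = 0 := zz 0 4 isT.
  all: rewrite ?Zv30 ?Zv21 ?Zv12 ?Zv03 ?Zv40 ?Zv31 ?Zv22 ?Zv13 ?Zv04.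
  all: have h0 := h2; have h1 := h2.
  all: field; repeat (apply/andP; split); first [exact: hdx' | exact: h2 | exact: h0 | exact: h1 | done].
}
have hD : ((d - 2)%:R : C) != 0 by rewrite pnatr_eq0 subn_eq0; apply/negP => h; move/eqP: d2; lia.
have hdx' := hdx.
have h2 : (2%:R : C) != 0 by rewrite pnatr_eq0.
evar (P0 : GRing.Field.sort C).
have HP0 : is_derive x (delta_mx 0 0) (Gn l 1 k) P0.
  rewrite /Gn /adjE /A.dt /sg; jet; exact hdx.
evar (P1 : GRing.Field.sort C).
have HP1 : is_derive x (delta_mx 0 1) (Gn l 0 k) P1.
  rewrite /Gn /adjE /A.dt /sg; jet; exact hdx.
rewrite curv_fold.
apply: etrans (curv_abs (Y := fun p q r => Gn p q r x) _ _ _) _.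
- apply: etrans _ (pd_val HP0); apply: near_eq_derive; near=> y; apply: chr_near; near: y; exact: nr.
- apply: etrans _ (pd_val HP1); apply: near_eq_derive; near=> y; apply: chr_near; near: y; exact: nr.
- by move=> p q r; apply: chr_near.
subst P0 P1; rewrite /Gn /adjE /A.dt /sg; cbv beta.
clear HP0 HP1.
rewrite /A.dt /A.DD in hdx'.
case: (ord2 l) => ->; case: (ord2 k) => ->; rewrite /= /A.DD.
all: set x0 := x 0 0 in e1 e2 e3 *.
all: set x1 := x 0 1 in e1 e2 e3 *.
all: set v20 := Dab a 2 0 x in e1 e2 e3 hdx' *.
all: set v11 := Dab a 1 1 x in e1 e2 e3 hdx' *.
all: set v02 := Dab a 0 2 x in e1 e2 e3 hdx' *.
all: set v30 := Dab a 3 0 x in e1 e2 e3 *.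
all: set v21 := Dab a 2 1 x in e1 e2 e3 *.
all: set v12 := Dab a 1 2 x in e1 e2 e3 *.
all: set v03 := Dab a 0 3 x in e1 e2 e3 *.
all: set v40 := Dab a 4 0 x.
all: set v31 := Dab a 3 1 x.
all: set v22 := Dab a 2 2 x.
all: set v13 := Dab a 1 3 x.
all: set v04 := Dab a 0 4 x.

all: clearbody x0 x1 v20 v11 v02 v30 v21 v12 v03 v40 v31 v22 v13 v04.
all: have [h0|h0] := eqVneq x0 0.
all: try (have h1 := h0;
  (have E30 : v30 = ((d - 2)%:R * v20 - x1 * v21) / x0 by rewrite -e1; field);
  (have E21 : v21 = ((d - 2)%:R * v11 - x1 * v12) / x0 by rewrite -e2; field);
  (have E12 : v12 = ((d - 2)%:R * v02 - x1 * v03) / x0 by rewrite -e3; field);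
  rewrite E30 E21 E12; field; repeat (apply/andP; split); first [exact: hdx' | exact: h2 | exact: h0 | exact: h1 | done];
  fail).
all: rewrite h0 in e1 e2 e3.
all: have [h1|h1] := eqVneq x1 0.
all: try (
  (have E21 : v21 = ((d - 2)%:R * v20) / x1 by rewrite -e1; field);
  (have E12 : v12 = ((d - 2)%:R * v11) / x1 by rewrite -e2; field);
  (have E03 : v03 = ((d - 2)%:R * v02) / x1 by rewrite -e3; field);
  rewrite E21 E12 E03; field; repeat (apply/andP; split); first [exact: hdx' | exact: h2 | exact: h0 | exact: h1 | done];
  fail).
all: rewrite h1 in e1 e2 e3.
all: exfalso.
all: have z20 : v20 = 0 by move/eqP: e1; rewrite !mul0r add0r eq_sym mulf_eq0 (negbTE hD) => /eqP.
all: have z11 : v11 = 0 by move/eqP: e2; rewrite !mul0r add0r eq_sym mulf_eq0 (negbTE hD) => /eqP.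
all: have z02 : v02 = 0 by move/eqP: e3; rewrite !mul0r add0r eq_sym mulf_eq0 (negbTE hD) => /eqP.
all: by move: hdx'; rewrite z20 z11 z02 !(mulr0, mul0r) subrr eqxx.
Unshelve. all: by end_near.
Qed.

End B.

Lemma curv_diag (C : numFieldType) (Ch : 'I_2 -> 'I_2 -> 'I_2 -> 'rV[C]_2 -> C) l k i x :
  pd (Ch l i k) i x - pd (Ch l i k) i x
  + \sum_(m < 2) (Ch l i m x * Ch m i k x - Ch l i m x * Ch m i k x) = 0.
Proof. by rewrite subrr add0r big1 // => m _; rewrite subrr. Qed.

Lemma curv_swap (C : numFieldType) (Ch : 'I_2 -> 'I_2 -> 'I_2 -> 'rV[C]_2 -> C) l k i j x :
  pd (Ch l j k) i x - pd (Ch l i k) j x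
  + \sum_(m < 2) (Ch l i m x * Ch m j k x - Ch l j m x * Ch m i k x) =
  - (pd (Ch l i k) j x - pd (Ch l j k) i x
  + \sum_(m < 2) (Ch l j m x * Ch m i k x - Ch l i m x * Ch m j k x)).
Proof. rewrite !sum2; ring. Qed.


Unset Implicit Arguments.
Theorem lemma6p1 (R : realType) (d : nat) (hd : (2 <= d)%N) (a : 'I_d.+1 -> R[i]) :
  flat_on (hessian_metric d (hom2 a))
          (fun x => \det (hessian (hom2 a) x) != 0).
Proof.
move=> x hx l k i j.
case: (ord2 i) => ->; case: (ord2 j) => ->.
- by rewrite curv_fold; apply: curv_diag.
- exact: (curv01 hd hx).
- rewrite curv_fold curv_swap -curv_fold.
  by rewrite (curv01 hd hx) oppr0.
- by rewrite curv_fold; apply: curv_diag.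
Qed.
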